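(* Every $\cap$-edge simplicial graph is split.
   Context: A clique $C$ is simplicial if $C=N[v]$ for some vertex $v$; a graph is edge simplicial if every edge lies in a simplicial clique; it is $\cap$-edge simplicial if both it and its complement are edge simplicial. A graph is split if its vertex set can be partitioned into a clique and a stable set. *)

(* Defs.v *)
From mathcomp Require Import all_boot.
Set Implicit Arguments. Unset Strict Implicit. Unset Printing Implicit Defensive.

Definition simple_graph (T : finType) (e : rel T) : Prop :=
  symmetric e /\ irreflexive e.

Definition compl_rel (T : finType) (e : rel T) : rel T :=
  fun x y => (x != y) && ~~ e x y.

Definition closed_nbhd (T : finType) (e : rel T) (v : T) : {set T} :=
  v |: [set u | e v u].

Definition is_clique (T : finType) (e : rel T) (C : {set T}) : Prop :=
  forall x y, x \in C -> y \in C -> x != y -> e x y.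

Definition is_stable (T : finType) (e : rel T) (S : {set T}) : Prop :=
  forall x y, x \in S -> y \in S -> ~~ e x y.

Definition simplicial_clique (T : finType) (e : rel T) (C : {set T}) : Prop :=
  is_clique e C /\ exists v, C = closed_nbhd e v.

Definition edge_simplicial (T : finType) (e : rel T) : Prop :=
  forall x y, e x y ->
    exists C : {set T}, [/\ simplicial_clique e C, x \in C & y \in C].

Definition cap_edge_simplicial (T : finType) (e : rel T) : Prop :=
  edge_simplicial e /\ edge_simplicial (compl_rel e).

Definition is_split (T : finType) (e : rel T) : Prop :=
  exists K S : {set T},
    [/\ K :&: S = set0, K :|: S = setT, is_clique e K & is_stable e S].

(* Main.v *)
Require Import Defs.
From mathcomp Require Import all_boot.
From Stdlib Require Import ClassicalEpsilon.

Definition dec (P : Prop) : bool :=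
  if excluded_middle_informative P then true else false.

Lemma decP (P : Prop) : reflect P (dec P).
Proof. by rewrite /dec; case: excluded_middle_informative => h; constructor. Qed.

Section S.
Variables (T : finType) (e : rel T).
Hypothesis esym : symmetric e.
Hypothesis eirr : irreflexive e.

Let simp v := is_clique e (closed_nbhd e v).
Let cos w := is_clique (compl_rel e) (closed_nbhd (compl_rel e) w).

Lemma nsym {x y : T} : x != y -> y != x.
Proof. by rewrite eq_sym. Qed.

Lemma mem_nb v x : (x \in closed_nbhd e v) = (x == v) || e v x.
Proof. by rewrite /closed_nbhd !inE. Qed.

Lemma mem_cnb v x :
  (x \in closed_nbhd (compl_rel e) v) = (x == v) || ((v != x) && ~~ e v x).
Proof. by rewrite /closed_nbhd !inE. Qed.

Lemma P2 v w x : simp v -> cos w -> e v w -> x != w -> ~~ e w x -> ~~ e v x.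
Proof.
move=> Hv _ evw xw ewx; apply/negP => evx.
have := Hv x w; rewrite !mem_nb evx evw !orbT => /(_ isT isT xw).
by rewrite esym (negbTE ewx).
Qed.

Lemma L1 w p : edge_simplicial e -> cos w -> p != w -> ~~ e w p -> simp p.
Proof.
move=> ES Hw pw ewp.
case: (pickP (fun q => e p q)) => [q epq | none].
  have [C [[Ccl [u Cu]] pC qC]] := ES p q epq.
  case: (eqVneq u p) => [up | nup]; first by rewrite /simp -up -Cu.
  have eup : e u p by move: pC; rewrite Cu mem_nb (negbTE (nsym nup)).
  have Hu : simp u by rewrite /simp -Cu.
  case: (eqVneq u w) => [uw | nuw]; first by move: ewp; rewrite -uw eup.
  case euw: (e u w).
    by move: (P2 _ _ _ Hu Hw euw pw ewp); rewrite eup.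
  have := Hw u p; rewrite !mem_cnb (negbTE nuw) (eq_sym w u) nuw /= esym euw.
  rewrite (negbTE pw) eq_sym pw ewp /= => /(_ isT isT nup).
  by rewrite /compl_rel eup andbF.
move=> x y; rewrite !mem_nb !none !orbF => /eqP -> /eqP ->.
by rewrite eqxx.
Qed.

Lemma L1' v q : edge_simplicial (compl_rel e) -> simp v -> e v q -> cos q.
Proof.
move=> ES Hv evq.
case: (pickP (fun r => compl_rel e q r)) => [r cqr | none].
  have [C [[Ccl [u Cu]] qC rC]] := ES q r cqr.
  case: (eqVneq u q) => [uq | nuq]; first by rewrite /cos -uq -Cu.
  have euq : ~~ e u q.
    by move: qC; rewrite Cu mem_cnb (negbTE (nsym nuq)) /= => /andP[].
  have Hu : cos u by rewrite /cos -Cu.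
  case: (eqVneq u v) => [uv | nuv]; first by move: euq; rewrite uv evq.
  case evu: (e v u).
    by move: (P2 _ _ _ Hv Hu evu (nsym nuq) euq); rewrite evq.
  have vq : v != q by apply/negP => /eqP vq; move: evq; rewrite vq eirr.
  have := Hu v q; rewrite !mem_cnb (eq_sym v u) (negbTE nuv) /= esym evu.
  rewrite (negbTE (nsym nuq)) euq nuq /= => /(_ isT isT vq).
  by rewrite /compl_rel evq andbF.
have nq : forall z, (q != z) && ~~ e q z = false by move=> z; apply: none.
move=> x y; rewrite !mem_cnb.
by rewrite !nq !orbF => /eqP -> /eqP ->; rewrite eqxx.
Qed.

Lemma cover p : edge_simplicial e -> edge_simplicial (compl_rel e) ->
  simp p \/ cos p.
Proof.
move=> ES ESc.
case: (pickP (fun q => e p q)) => [q epq | none].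
  have [C [[Ccl [u Cu]] pC qC]] := ES p q epq.
  case: (eqVneq u p) => [up | nup]; first by left; rewrite /simp -up -Cu.
  have eup : e u p by move: pC; rewrite Cu mem_nb (negbTE (nsym nup)).
  by right; apply: (@L1' u) => //; rewrite /simp -Cu.
left => x y; rewrite !mem_nb !none !orbF => /eqP -> /eqP ->.
by rewrite eqxx.
Qed.

Lemma main : edge_simplicial e -> edge_simplicial (compl_rel e) -> is_split e.
Proof.
move=> ES ESc.
case: (pickP (fun v => dec (simp v /\ cos v))) => [v /decP [Hs Hc] | none].
  exists (closed_nbhd e v), (~: closed_nbhd e v); split.
  - by rewrite setICr.
  - by rewrite setUCr.
  - exact: Hs.
  - move=> x y; rewrite !in_setC !mem_nb !negb_or => /andP[xv vx] /andP[yv vy].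
    case: (eqVneq x y) => [-> | xy]; first by rewrite eirr.
    have := Hc x y; rewrite !mem_cnb (eq_sym v x) xv vx (eq_sym v y) yv vy !orbT.
    by move=> /(_ isT isT xy) /andP[].
exists [set x | dec (cos x)], (~: [set x | dec (cos x)]); split.
- by rewrite setICr.
- by rewrite setUCr.
- move=> x y; rewrite !inE => /decP cx /decP cy xy.
  case exy: (e x y) => //.
  have sy := L1 _ _ ES cx (nsym xy) (negbT exy).
  have := none y; rewrite /=; case: decP => [//|np _]; exfalso; exact: np (conj sy cy).
- move=> x y; rewrite !inE => /decP cx /decP cy.
  apply/negP => exy.
  have [sx|] := cover x ES ESc; last by [].
  exact: (cy (L1' _ _ ESc sx exy)).
Qed.

End S.

Theorem proposition27 (T : finType) (e : rel T) :
  simple_graph e -> cap_edge_simplicial e -> is_split e.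
Proof.
move=> [Hs Hi] [ES ESc]; exact: main.
Qed.
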